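(* Fix an integer $n\ge 2$, and assume that for every choice of positive integers $v_1,\ldots,v_n$ one has either $\mathrm{ML}(v_1,\ldots,v_n)=\frac{s}{ns+1}$ for some $s\in\mathbb{N}$ or $\mathrm{ML}(v_1,\ldots,v_n)\ge \frac1n$. Then for all positive integers $w_1,\ldots,w_{n-1}$ one has $\mathrm{ML}(w_1,\ldots,w_{n-1})\ge \frac1n$.
   Context: For a real number $x$, $\Vert x\Vert$ denotes the distance from $x$ to the nearest integer. For positive integers $v_1,\ldots,v_k$, the maximum loneliness is $\mathrm{ML}(v_1,\ldots,v_k)=\max_{t\in\mathbb{R}}\min_{1\le i\le k}\Vert t v_i\Vert$. Here $\mathbb{N}=\{1,2,3,\ldots\}$. *)

(* Defs.v *)
From HB Require Import structures.
From mathcomp Require Import all_boot all_order all_algebra.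
From mathcomp Require Import all_classical all_reals.
Set Implicit Arguments. Unset Strict Implicit. Unset Printing Implicit Defensive.
Import Order.TTheory GRing.Theory Num.Theory.
Local Open Scope ring_scope.
Local Open Scope classical_set_scope.

Definition dist_int {R : realType} (x : R) : R :=
  Num.min (x - (Num.floor x)%:~R) ((Num.ceil x)%:~R - x).

(* min_{1<=i<=k} ||t v_i||; the neutral element 1 is irrelevant for k >= 1
   since every ||.|| is at most 1/2. *)
Definition loneliness {R : realType} (k : nat) (v : 'I_k -> nat) (t : R) : R :=
  \big[Num.min/1]_(i < k) dist_int (t * (v i)%:R).

(* ML(v_1,...,v_k) = max_t min_i ||t v_i||, written as the supremum of the
   (bounded, attained) set of values. *)
Definition ML {R : realType} (k : nat) (v : 'I_k -> nat) : R :=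
  sup [set m : R | exists t : R, m = loneliness v t].

(* Main.v *)
Require Import Defs.
From HB Require Import structures.
From mathcomp Require Import all_boot all_order all_algebra.
From mathcomp Require Import all_classical all_reals.
From mathcomp Require Import all_analysis.
From mathcomp Require Import ring lra.
Import Order.TTheory GRing.Theory Num.Theory.
Import numFieldNormedType.Exports.
Local Open Scope ring_scope.

Section D.
Variable R : realType.
Set Implicit Arguments. Unset Strict Implicit.
Implicit Types x y a : R.

Lemma dist_le x (z : int) : dist_int x <= `|x - z%:~R|.
Proof.
rewrite /dist_int.
have hf := floor_le x. have hc := ceil_ge x.
have hcf : (Num.ceil x <= Num.floor x + 1)%R.
  by rewrite ceil_le_int; case/andP: (floor_itv x) => _ /ltW.
case: (leP z (Num.floor x)) => hz.
- have hz' : (z%:~R <= (Num.floor x)%:~R :> R) by rewrite ler_int.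
  rewrite ger0_norm; last by lra.
  rewrite ge_min; apply/orP; left; lra.
- have hz' : ((Num.ceil x)%:~R <= z%:~R :> R).
    by rewrite ler_int; apply: (le_trans hcf); rewrite lezD1.
  rewrite ler0_norm; last by lra.
  rewrite ge_min; apply/orP; right; lra.
Qed.

Lemma dist_ex x : exists z : int, dist_int x = `|x - z%:~R|.
Proof.
rewrite /dist_int.
have hf := floor_le x. have hc := ceil_ge x.
case: (leP (x - (Num.floor x)%:~R) ((Num.ceil x)%:~R - x)) => h.
- exists (Num.floor x); rewrite ger0_norm //; lra.
- exists (Num.ceil x); rewrite ler0_norm //; lra.
Qed.

Lemma dist_ge0 x : 0 <= dist_int x.
Proof. by case: (dist_ex x) => z ->. Qed.

Lemma dist_lip1 x y : dist_int x <= dist_int y + `|x - y|.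
Proof.
case: (dist_ex y) => z ->.
apply: (le_trans (dist_le x z)).
have -> : x - z%:~R = (x - y) + (y - z%:~R) by ring.
by rewrite addrC ler_normD.
Qed.

Lemma dist_lip x y : `|dist_int x - dist_int y| <= `|x - y|.
Proof.
have h1 := dist_lip1 x y. have h2 := dist_lip1 y x.
rewrite distrC in h2.
rewrite ler_norml; apply/andP; split; lra.
Qed.

Lemma dist_shift x (z : int) : dist_int (x + z%:~R) = dist_int x.
Proof.
apply/eqP; rewrite eq_le; apply/andP; split.
- case: (dist_ex x) => z0 ->.
  apply: le_trans (dist_le _ (z0 + z)) _.
  rewrite intrD; have -> : x + z%:~R - (z0%:~R + z%:~R) = x - z0%:~R by ring.
  by [].
- case: (dist_ex (x + z%:~R)) => z0 ->.
  apply: le_trans (dist_le _ (z0 - z)) _.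
  rewrite intrB; have -> : x - (z0%:~R - z%:~R) = x + z%:~R - z0%:~R by ring.
  by [].
Qed.

Lemma dist_int0 (z : int) : dist_int (z%:~R : R) = 0.
Proof.
apply/eqP; rewrite eq_le dist_ge0 andbT.
by apply: le_trans (dist_le _ z) _; rewrite subrr normr0.
Qed.

Lemma dist_half (z : int) : dist_int (z%:~R + 2^-1 : R) = 2^-1.
Proof.
apply/eqP; rewrite eq_le; apply/andP; split.
- apply: le_trans (dist_le _ z) _.
  have -> : (z%:~R + 2^-1 - z%:~R : R) = 2^-1 by ring.
  by rewrite ger0_norm.
- case: (dist_ex (z%:~R + 2^-1)) => z0 ->.
  have -> : (z%:~R + 2^-1 - z0%:~R : R) = (z - z0)%:~R + 2^-1 by rewrite intrB; ring.
  case: (leP 0 (z - z0)) => h.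
  + have : (0 <= (z - z0)%:~R :> R) by rewrite ler0z.
    move=> h'; rewrite ger0_norm; lra.
  + have : ((z - z0 + 1)%:~R <= 0 :> R) by rewrite lerz0 lezD1.
    rewrite intrD => h'; rewrite ler0_norm; lra.
Qed.

Lemma dist_eq x a : dist_int x = a -> exists z : int, x = z%:~R + a \/ x = z%:~R - a.
Proof.
case: (dist_ex x) => z -> <-; exists z.
case: (leP 0 (x - z%:~R)) => h.
- by left; rewrite ger0_norm //; ring.
- by right; rewrite ltr0_norm //; ring.
Qed.

Lemma bigmin_le k (F : 'I_k -> R) j : \big[Num.min/1]_(i < k) F i <= F j.
Proof.
rewrite /index_enum; move: (mem_index_enum j); rewrite /index_enum.
elim: (Finite.enum _) => [|x s IH] //=.
rewrite in_cons big_cons => /orP [/eqP ->|/IH h].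
- by rewrite ge_min lexx.
- by rewrite ge_min h orbT.
Qed.

Lemma le_bigmin k (F : 'I_k -> R) x :
  x <= 1 -> (forall i, x <= F i) -> x <= \big[Num.min/1]_(i < k) F i.
Proof.
move=> h1 hF; apply: (big_ind (fun y => x <= y)) => //.
by move=> a b ha hb; rewrite le_min ha hb.
Qed.

Lemma bigmin_ex k (F : 'I_k -> R) :
  \big[Num.min/1]_(i < k) F i = 1 \/ exists i, \big[Num.min/1]_(i < k) F i = F i.
Proof.
apply: (big_ind (fun y => y = 1 \/ exists i, y = F i)); first by left.
- move=> a b ha hb; case: (leP a b) => _; [exact: ha | exact: hb].
- by move=> i _; right; exists i.
Qed.

Lemma dist_le1 x : dist_int x <= 1.
Proof.
apply: le_trans (dist_le x (Num.floor x)) _.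
case/andP: (floor_itv x) => h1 h2; rewrite intrD in h2.
by rewrite ger0_norm; lra.
Qed.

Lemma lon_ge0 k (v : 'I_k -> nat) (t : R) : 0 <= loneliness v t.
Proof. by apply: le_bigmin => // i; apply: dist_ge0. Qed.

Lemma lon_le1 k (v : 'I_k -> nat) (t : R) : loneliness v t <= 1.
Proof.
apply: (big_ind (fun y => y <= 1)) => //.
- by move=> a b ha hb; rewrite ge_min ha.
- by move=> i _; apply: dist_le1.
Qed.

Lemma lon_le k (v : 'I_k -> nat) (t : R) i : loneliness v t <= dist_int (t * (v i)%:R).
Proof. exact: bigmin_le. Qed.

Lemma lon_lip1 k (v : 'I_k -> nat) (t t' : R) :
  loneliness v t - ((\sum_i v i)%N%:R + 1) * `|t - t'| <= loneliness v t'.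
Proof.
have hC : 0 <= ((\sum_i v i)%N%:R + 1) * `|t - t'| :> R.
  by rewrite mulr_ge0 // addr_ge0.
apply: le_bigmin.
  by have := lon_le1 v t; lra.
move=> i.
have h1 := lon_le v t i.
have h2 := dist_lip1 (t * (v i)%:R) (t' * (v i)%:R).
have h3 : `|t * (v i)%:R - t' * (v i)%:R| <= ((\sum_i v i)%N%:R + 1) * `|t - t'|.
  rewrite -mulrBl normrM mulrC ler_wpM2r // ger0_norm // ler_wpDr // ler_nat.
  by rewrite (bigD1 i) //= leq_addr.
lra.
Qed.

Lemma lon_lip k (v : 'I_k -> nat) (t t' : R) :
  `|loneliness v t - loneliness v t'| <= ((\sum_i v i)%N%:R + 1) * `|t - t'|.
Proof.
have h1 := lon_lip1 v t t'. have h2 := lon_lip1 v t' t.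
rewrite distrC in h2.
rewrite ler_norml; apply/andP; split; lra.
Qed.

Lemma lon_shift k (v : 'I_k -> nat) (t : R) (z : int) :
  loneliness v (t + z%:~R) = loneliness v t.
Proof.
apply: eq_bigr => i _.
rewrite mulrDl.
have -> : (z%:~R * (v i)%:R : R) = (z * (v i)%:Z)%:~R by rewrite intrM.
by rewrite dist_shift.
Qed.

Lemma lip_cont (f : R -> R) (C : R) : 0 < C ->
  (forall x y, `|f x - f y| <= C * `|x - y|) -> continuous f.
Proof.
move=> C0 H x.
apply/(@cvgrPdist_lt _ _ _ (nbhs x)) => e e0.
near=> z.
rewrite (le_lt_trans (H _ _)) // -ltr_pdivlMl //.
near: z. apply: cvgr_dist_lt => //.
by rewrite mulrC divr_gt0.
Unshelve. all: by end_near.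
Qed.


Local Open Scope classical_set_scope.
Lemma ML_ub k (v : 'I_k -> nat) : has_ubound [set m : R | exists t : R, m = loneliness v t].
Proof. by exists 1 => m [t ->]; apply: lon_le1. Qed.

Lemma ML_ne k (v : 'I_k -> nat) : [set m : R | exists t : R, m = loneliness v t] !=set0.
Proof. by exists (loneliness v 0); exists 0. Qed.

Lemma lon_le_ML k (v : 'I_k -> nat) (t : R) : loneliness v t <= ML v.
Proof. by apply: ub_le_sup; [exact: ML_ub | exists t]. Qed.

Lemma ML_le k (v : 'I_k -> nat) (b : R) : (forall t, loneliness v t <= b) -> ML v <= b.
Proof. by move=> h; apply: ge_sup; [exact: ML_ne | move=> m [t ->]]. Qed.

Lemma ML_adh k (v : 'I_k -> nat) (e : R) : 0 < e -> exists t, ML v - e < loneliness v t.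
Proof.
move=> e0; have [m [t ->] h] := sup_adherent e0 (conj (ML_ne v) (ML_ub v)).
by exists t.
Qed.

Lemma ML_att k (v : 'I_k -> nat) : exists t : R, ML v = loneliness v t.
Proof.
have hc : {within `[0, 1], continuous (@loneliness R k v)}.
  apply: continuous_subspaceT; apply: (lip_cont (C := ((\sum_i v i)%N%:R + 1))).
    by rewrite ltr_wpDl.
  exact: lon_lip.
have [c _ hmax] := EVT_max ler01 hc.
exists c; apply/eqP; rewrite eq_le lon_le_ML andbT.
apply: ML_le => t.
rewrite -(lon_shift v t (- Num.floor t)).
apply: hmax; rewrite in_itv /=; apply/andP; split.
- by rewrite intrN subr_ge0 floor_le.
- case/andP: (floor_itv t) => _ h; rewrite intrD in h.
  by rewrite intrN; apply: ltW; lra.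
Qed.

Definition ext m (w : 'I_m.+1 -> nat) (x0 : nat) : 'I_m.+2 -> nat :=
  fun i => if (i < m.+1)%N then w (inord i) else x0.

Lemma lon_ext m (w : 'I_m.+1 -> nat) (x0 : nat) (t : R) :
  loneliness (ext w x0) t = Num.min (loneliness w t) (dist_int (t * x0%:R)).
Proof.
apply/eqP; rewrite eq_le; apply/andP; split.
- rewrite le_min; apply/andP; split.
  + apply: le_bigmin; first exact: lon_le1.
    move=> i; apply: le_trans (lon_le _ _ (widen_ord (leqnSn _) i)) _.
    rewrite /ext /= ltn_ord.
    have -> : inord (widen_ord (leqnSn m.+1) i) = i by apply: val_inj; rewrite /= inordK.
    by [].
  + apply: le_trans (lon_le _ _ ord_max) _.
    by rewrite /ext /= ltnn.
- apply: le_bigmin; first by rewrite ge_min lon_le1.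
  move=> i; rewrite /ext; case: ifP => hi.
  + by rewrite ge_min lon_le.
  + by rewrite ge_min lexx orbT.
Qed.

Lemma ext_pos m (w : 'I_m.+1 -> nat) (x0 : nat) :
  (forall i, (0 < w i)%N) -> (0 < x0)%N -> forall i, (0 < ext w x0 i)%N.
Proof. by move=> hw hx i; rewrite /ext; case: ifP. Qed.

Lemma gap (c : R) (s s0 : nat) : 0 < c ->
  s%:R / (c * s%:R + 1) < s0%:R / (c * s0%:R + 1) ->
  s%:R / (c * s%:R + 1) <= s0%:R / (c * s0%:R + 1) - 1 / (c * s0%:R + 1) ^+ 2.
Proof.
move=> c0 h.
have ha : 0 <= s%:R :> R by [].
have hb : 0 <= s0%:R :> R by [].
have hA : 0 < c * s%:R + 1 by rewrite ltr_pwDr // mulr_ge0 // ltW.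
have hB : 0 < c * s0%:R + 1 by rewrite ltr_pwDr // mulr_ge0 // ltW.
have hlt : (s < s0)%N.
  rewrite ltnNge; apply/negP => hle.
  have hle' : s0%:R <= s%:R :> R by rewrite ler_nat.
  have e : s%:R / (c * s%:R + 1) - s0%:R / (c * s0%:R + 1) =
       (s%:R - s0%:R) / ((c * s%:R + 1) * (c * s0%:R + 1)).
    by field; apply/andP; split; rewrite gt_eqF.
  have : 0 <= (s%:R - s0%:R) / ((c * s%:R + 1) * (c * s0%:R + 1)) :> R.
    by apply: divr_ge0; [rewrite subr_ge0 | rewrite mulr_ge0 // ltW].
  rewrite -e; lra.
have hlt' : s%:R + 1 <= s0%:R :> R by rewrite natr1 ler_nat.
rewrite -subr_ge0.
have e : s0%:R / (c * s0%:R + 1) - 1 / (c * s0%:R + 1) ^+ 2 - s%:R / (c * s%:R + 1) =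
   ((c * s0%:R + 1) * (s0%:R - s%:R) - (c * s%:R + 1)) / ((c * s%:R + 1) * (c * s0%:R + 1) ^+ 2).
  by field; apply/andP; split; rewrite gt_eqF.
rewrite e divr_ge0 ?mulr_ge0 ?exprn_ge0 ?ltW //.
nra.
Qed.
End D.

Theorem proposition3p3 (R : realType) (n : nat) (hn : (2 <= n)%N) :
  (forall v : 'I_n -> nat, (forall i, (0 < v i)%N) ->
     (exists s : nat, (1 <= s)%N /\
        ML v = (s%:R / (n%:R * s%:R + 1) : R))
     \/ (1 / n%:R : R) <= ML v) ->
  forall w : 'I_n.-1 -> nat, (forall i, (0 < w i)%N) ->
    (1 / n%:R : R) <= ML w.
Proof.
case: n hn => [|[|m]] // _ hyp w wpos.
set c : R := (m.+2)%:R.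
have c2 : 2 <= c by rewrite /c ler_nat.
have c0 : 0 < c by apply: lt_le_trans c2.
set d : R := ML w.
case: (leP (1 / c) d) => // hlt.
suff : False by [].
have hLw : forall t : R, loneliness w t <= d by move=> t; apply: lon_le_ML.
have e1 : forall t : R, loneliness (ext w (w ord0)) t = loneliness w t.
  by move=> t; rewrite lon_ext; apply/min_idPl; apply: lon_le.
have eML : ML (ext w (w ord0)) = d.
  apply/eqP; rewrite eq_le; apply/andP; split.
  - by apply: ML_le => t; rewrite e1.
  - by apply: ML_le => t; rewrite -e1; apply: lon_le_ML.
case: (hyp _ (ext_pos wpos (wpos ord0))) => [[s0 [hs0 hd]]|h]; last first.
  by rewrite eML -/c in h; move: (lt_le_trans hlt h); rewrite ltxx.
rewrite eML -/c in hd.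
have s0p : 1 <= s0%:R :> R by rewrite ler1n.
have hB : 0 < c * s0%:R + 1 by rewrite ltr_pwDr // mulr_ge0 // ltW.
have d0 : 0 < d by rewrite hd divr_gt0 // ltr0n.
have dh : d <= 2^-1.
  apply: le_trans (ltW hlt) _.
  by rewrite mul1r lef_pV2 ?posrE.
set g : R := 1 / (c * s0%:R + 1) ^+ 2.
have g0 : 0 < g by rewrite divr_gt0 // exprn_gt0.
set C : R := (\sum_i w i)%N%:R + 1.
have C0 : 0 < C by rewrite ltr_wpDl.
set P := ((m.+2 * s0 + 1) * \prod_i w i)%N.
have P0 : (0 < P)%N by rewrite muln_gt0 addn1 /= prodn_gt0.
set M := (Num.truncn (2 * C / g)).+1.
set N := (P * M)%N.
have N0 : (0 < N)%N by rewrite muln_gt0 P0.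
have hN : 2 * C < g * N%:R.
  have h1 := truncnS_gt (2 * C / g).
  have h2 : (M%:R <= N%:R :> R) by rewrite ler_nat /N leq_pmull.
  rewrite -/M in h1.
  have h3 : 2 * C / g < N%:R by apply: lt_le_trans h1 h2.
  by move: h3; rewrite ltr_pdivrMr // (mulrC N%:R).
have Nr0 : 0 < N%:R :> R by rewrite ltr0n.
have hlow : d - g < ML (ext w N).
  have [t0 ht0] := ML_adh w (e := g / 2) ltac:(by rewrite divr_gt0).
  rewrite -/d in ht0.
  set k := Num.floor (t0 * N%:R).
  pose t : R := (k%:~R + 2^-1) / N%:R.
  have dtN : dist_int (t * N%:R) = 2^-1 by rewrite /t divfK ?gt_eqF // dist_half.
  have hX : `|t0 - t| * N%:R <= 1.
    rewrite -(ger0_norm (ltW Nr0)) -normrM mulrBl /t divfK ?gt_eqF //.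
    case/andP: (floor_itv (t0 * N%:R)) => h1 h2; rewrite intrD -/k in h1 h2.
    rewrite ler_norml; apply/andP; split; lra.
  have hX0 : 0 <= `|t0 - t| by [].
  have hCX : C * `|t0 - t| <= g / 2.
    have q1 : 0 <= (g * N%:R - 2 * C) * `|t0 - t| by rewrite mulr_ge0 // subr_ge0 ltW.
    have q2 : 0 <= g * (1 - `|t0 - t| * N%:R) by apply: mulr_ge0; [exact: ltW | rewrite subr_ge0].
    have e : g - 2 * (C * `|t0 - t|) = (g * N%:R - 2 * C) * `|t0 - t| + g * (1 - `|t0 - t| * N%:R) by ring.
    lra.
  have hl := lon_lip1 w t0 t; rewrite -/C in hl.
  apply: lt_le_trans (lon_le_ML _ t).
  rewrite lon_ext dtN lt_min; apply/andP; split; lra.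
have hup : ML (ext w N) < d.
  have [ts hts] := ML_att R (ext w N).
  rewrite hts lon_ext.
  case: (ltP (loneliness w ts) d) => h1; first by rewrite gt_min h1.
  have hLe : loneliness w ts = d by apply/eqP; rewrite eq_le h1 hLw.
  rewrite gt_min; apply/orP; right.
  move: hLe; rewrite /loneliness.
  case: (bigmin_ex (fun i => dist_int (ts * (w i)%:R))) => [->|[i ->]] hLe.
    by lra.
  have [z hz] := dist_eq hLe.
  have hdv : (w i %| \prod_j w j)%N by rewrite (bigD1 i) //= dvdn_mulr.
  pose q := ((\prod_j w j) %/ w i)%N.
  have hq : \prod_j w j = (q * w i)%N by rewrite /q divnK.
  pose Q := (q * M)%N.
  have eN : N%:R = (m.+2 * s0 + 1)%N%:R * (w i)%:R * Q%:R :> R.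
    by rewrite /N /P /Q hq !natrM; ring.
  have es : d * (c * s0%:R + 1) = s0%:R by rewrite hd divfK ?gt_eqF.
  have ec : (m.+2 * s0 + 1)%N%:R = c * s0%:R + 1 :> R by rewrite natrD natrM.
  have : exists y : int, ts * N%:R = y%:~R.
    rewrite eN ec.
    have -> : ts * ((c * s0%:R + 1) * (w i)%:R * Q%:R) = (ts * (w i)%:R) * (c * s0%:R + 1) * Q%:R by ring.
    case: hz => ->.
    - exists ((z * (m.+2 * s0 + 1)%N + s0%:Z) * Q%:Z).
      have -> : ((z * (m.+2 * s0 + 1)%N + s0%:Z) * Q%:Z)%:~R = (z%:~R * (c * s0%:R + 1) + s0%:R) * Q%:R :> R.
        by rewrite intrM intrD intrM -ec.
      by rewrite mulrDl es.
    - exists ((z * (m.+2 * s0 + 1)%N - s0%:Z) * Q%:Z).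
      have -> : ((z * (m.+2 * s0 + 1)%N - s0%:Z) * Q%:Z)%:~R = (z%:~R * (c * s0%:R + 1) - s0%:R) * Q%:R :> R.
        by rewrite intrM intrB intrM -ec.
      by rewrite mulrBl es.
  by case=> y ->; rewrite dist_int0.
case: (hyp _ (ext_pos wpos N0)) => [[s [hs hv]]|h]; last first.
  by rewrite -/c in h; have := lt_le_trans (lt_trans hup hlt) h; rewrite ltxx.
rewrite -/c hv in hlow hup.
rewrite hd in hup hlow.
have := gap c0 hup.
move=> hg. have := lt_le_trans hlow hg.
by rewrite /g ltxx.
Qed.
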